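(* Let $n\ge2$ and let $\varphi$ be a skew morphism of $\mathbb{Z}_n$ with even complexity and auto-order $m$. Then $m$ divides $n$, and $\varphi$ taken modulo $m$ is the trivial permutation of $\mathbb{Z}_m$, i.e. $\varphi(x)\equiv x\pmod m$ for all $x\in\mathbb{Z}_n$.
   Context: $\mathbb{Z}_n$ is the cyclic group of integers modulo $n$. A skew morphism of a finite group $G$ is a permutation $\varphi$ of $G$ fixing the identity such that for each $a\in G$ there is a non-negative integer $i_a$ with $\varphi(ab)=\varphi(a)\varphi^{i_a}(b)$ for all $b\in G$. ${\rm ord}(\varphi)$ is the order of $\langle\varphi\rangle$. If $\varphi$ is non-trivial, $\pi_\varphi(a)$ is the unique such $i_a\in\{1,\dots,{\rm ord}(\varphi)-1\}$; if $\varphi$ is the identity, $\pi_\varphi(a)=1$. Let $\sigma_\varphi(x,y)=\sum_{i=0}^{x-1}\pi_\varphi(\varphi^i(y))\in\mathbb{Z}_{{\rm ord}(\varphi)}$. For a skew morphism $\varphi$ of $\mathbb{Z}_n$, the derived skew morphism $\varphi'$ is the skew morphism of $\mathbb{Z}_{{\rm ord}(\varphi)}$ given by $\varphi'(a)=\sigma_\varphi(a,1)$. Set $\varphi^{(0)}=\varphi$, $\varphi^{(i+1)}=(\varphi^{(i)})'$. For $n\ge2$ the complexity of $\varphi$ is the unique non-negative integer $c$ such that $\varphi^{(c)}$ is a skew morphism of a non-trivial cyclic group $\mathbb{Z}_m$ and $\varphi^{(c+1)}$ is a skew morphism of $\mathbb{Z}_1$; then $\varphi^{(c)}$ is the identity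 of $\mathbb{Z}_m$, and $m$ is the auto-order of $\varphi$. For a divisor $m$ of $n$, ''$\varphi$ taken modulo $m$'' is the map $x \bmod m\mapsto \varphi(x)\bmod m$ on $\mathbb{Z}_m$ (when well defined). *)

(* Defs.v *)
From mathcomp Require Import all_boot.
Set Implicit Arguments. Unset Strict Implicit. Unset Printing Implicit Defensive.

(* Convention: Z_n is represented by the naturals {0,...,n-1} with addition
   modulo n; a map of Z_n is a function f : nat -> nat of which only the
   values on {0,...,n-1} matter. *)

Definition is_skew (n : nat) (f : nat -> nat) : Prop :=
  [/\ (forall x, x < n -> f x < n),
      (forall x y, x < n -> y < n -> f x = f y -> x = y),  (* injective => permutation *)
      f 0 = 0 &
      (forall a, a < n -> exists i : nat, forall b, b < n ->
          f ((a + b) %% n) = (f a + iter i f b) %% n)].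

Definition is_id (n : nat) (f : nat -> nat) : bool :=
  all (fun x => f x == x) (iota 0 n).

(* ord(f) = order of <f>: the least k >= 1 with f^k = id on Z_n.
   (For a permutation of an n-element set, the order is at most n`!.) *)
Definition ordf (n : nat) (f : nat -> nat) : nat :=
  (find (fun k => is_id n (iter k.+1 f)) (iota 0 n`!)).+1.

(* pi_f(a): the (unique) i in {1,...,ord f - 1} with
   f(a+b) = f(a) + f^i(b) for all b; equal to 1 if f is the identity. *)
Definition pif (n : nat) (f : nat -> nat) (a : nat) : nat :=
  if is_id n f then 1 else
  (find (fun i => all (fun b => f ((a + b) %% n) == (f a + iter i.+1 f b) %% n)
                      (iota 0 n))
        (iota 0 (ordf n f).-1)).+1.

Definition sigmaf (n : nat) (f : nat -> nat) (x y : nat) : nat :=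
  (\sum_(i < x) pif n f (iter i f y)) %% ordf n f.

(* The derived skew morphism f' of Z_{ord f}: f'(a) = sigma_f(a, 1). *)
Definition derived (p : nat * (nat -> nat)) : nat * (nat -> nat) :=
  (ordf p.1 p.2, fun a => sigmaf p.1 p.2 a (1 %% p.1)).

Definition derived_iter (k : nat) (n : nat) (f : nat -> nat) : nat * (nat -> nat) :=
  iter k derived (n, f).

(* c is the complexity of f (n >= 2): f^(c) acts on a non-trivial Z_m
   and f^(c+1) acts on Z_1. *)
Definition complexity_is (n : nat) (f : nat -> nat) (c : nat) : Prop :=
  2 <= (derived_iter c n f).1 /\ (derived_iter c.+1 n f).1 = 1.

Definition auto_order (n : nat) (f : nat -> nat) (c : nat) : nat :=
  (derived_iter c n f).1.

(* Main.v *)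
Require Import Defs.
From mathcomp Require Import all_boot all_fingroup zify.
Set Implicit Arguments. Unset Strict Implicit. Unset Printing Implicit Defensive.

Lemma is_idP N (h : nat -> nat) : reflect (forall x, x < N -> h x = x) (is_id N h).
Proof.
apply: (iffP allP) => H x.
  by move=> xN; apply/eqP/H; rewrite mem_iota.
by rewrite mem_iota add0n => /andP[_ xN]; apply/eqP/H.
Qed.

Section Skew.
Variables (n : nat) (f : nat -> nat).
Hypothesis n_gt0 : 0 < n.
Hypothesis fS : is_skew n f.

Lemma f_lt x : x < n -> f x < n. Proof. by case: fS => H *; apply: H. Qed.
Lemma f_inj x y : x < n -> y < n -> f x = f y -> x = y. Proof. by case: fS => _ H *; apply: H. Qed.
Lemma f0 : f 0 = 0. Proof. by case: fS. Qed.
Lemma f_skew a : a < n -> exists i, forall b, b < n -> f ((a + b) %% n) = (f a + iter i f b) %% n.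
Proof. by case: fS => _ _ _ H; apply: H. Qed.

Lemma iter_lt k x : x < n -> iter k f x < n.
Proof. by move=> xn; elim: k => //= k IH; apply: f_lt. Qed.

Lemma iter_inj k x y : x < n -> y < n -> iter k f x = iter k f y -> x = y.
Proof.
move=> xn yn; elim: k => //= k IH E; apply: IH.
by apply: f_inj => //; apply: iter_lt.
Qed.

Lemma exists_period : exists2 k, 0 < k <= n`! & forall x, x < n -> iter k f x = x.
Proof.
pose F := fun i : 'I_n => Ordinal (f_lt (ltn_ord i)).
have Finj : injective F.
  move=> i j /(congr1 val) /= /f_inj E; apply: val_inj; exact: E.
pose s := perm Finj.
have Hs : forall k (i : 'I_n), val ((s ^+ k)%g i) = iter k f i.
  move=> k i; elim: k => [|k IH]; first by rewrite expg0 perm1.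
  by rewrite expgSr permM permE /= IH.
exists #[s]%g.
  rewrite order_gt0 /=; apply: dvdn_leq; first exact: fact_gt0.
  rewrite -card_Sn -cardsT; apply: cardSg; exact: subsetT.
move=> x xn; have := Hs #[s]%g (Ordinal xn); rewrite expg_order perm1 /=.
by move=> <-.
Qed.

Definition m := ordf n f.

Lemma m_gt0 : 0 < m. Proof. by []. Qed.

Definition Pid := (fun k => is_id n (iter k.+1 f)).

Lemma hasPid : has Pid (iota 0 n`!).
Proof.
have [k /andP[k0 kn] Hk] := exists_period.
apply/hasP; exists k.-1; first by rewrite mem_iota add0n prednK.
by rewrite /Pid prednK //; apply/is_idP.
Qed.

Lemma m_le : m <= n`!.
Proof. by have := hasPid; rewrite has_find size_iota. Qed.

Lemma ord_id x : x < n -> iter m f x = x.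
Proof.
have := nth_find 0 hasPid; rewrite nth_iota; last exact: m_le.
by rewrite add0n /Pid => /is_idP; apply.
Qed.

Lemma ord_min k : 0 < k < m -> ~~ is_id n (iter k f).
Proof.
case/andP=> k0 km.
have := @before_find _ 0 Pid (iota 0 n`!) k.-1.
rewrite nth_iota; last by have := m_le; lia.
rewrite add0n /Pid prednK // => H; apply/negbT; apply: H.
exact: km.
Qed.

Lemma iter_mulm q x : x < n -> iter (q * m) f x = x.
Proof. by move=> xn; elim: q => [|q IH] //; rewrite mulSn iterD IH ord_id. Qed.

Lemma iter_mod k x : x < n -> iter k f x = iter (k %% m) f x.
Proof. by move=> xn; rewrite {1}(divn_eq k m) addnC iterD iter_mulm. Qed.

Lemma id_dvd k : (forall x, x < n -> iter k f x = x) -> m %| k.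
Proof.
move=> H; rewrite /dvdn; apply/negPn/negP => r0.
have := @ord_min (k %% m); rewrite lt0n r0 ltn_pmod //= => /(_ isT) /negP; apply.
by apply/is_idP => x xn; rewrite -iter_mod // H.
Qed.

Lemma iter_eq_mod j k : (forall x, x < n -> iter j f x = iter k f x) -> j = k %[mod m].
Proof.
wlog jk : j k / j <= k.
  move=> W H; case: (leqP j k) => [|/ltnW] h; first exact: W.
  by symmetry; apply: W => // x xn; rewrite H.
move=> H; have : m %| k - j.
  apply: id_dvd => y yn.
  pose x := iter (m * j - j) f y.
  have xy : iter j f x = y.
    by rewrite /x -iterD subnKC ?leq_pmull // mulnC iter_mulm.
  have xn : x < n by apply: iter_lt.
  by rewrite -{1}xy -iterD subnK // -H.
case/dvdnP => q E.
by rewrite -(subnK jk) E modnMDl.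
Qed.

Lemma addmod_inj a x y : x < n -> y < n -> (a + x) %% n = (a + y) %% n -> x = y.
Proof. by move=> xn yn /eqP; rewrite eqn_modDl !modn_small // => /eqP. Qed.

Lemma addmod_injr a x y : x < n -> y < n -> (x + a) %% n = (y + a) %% n -> x = y.
Proof. by move=> xn yn /eqP; rewrite eqn_modDr !modn_small // => /eqP. Qed.

Lemma pifP a b : a < n -> b < n ->
  f ((a + b) %% n) = (f a + iter (pif n f a) f b) %% n.
Proof.
move=> an bn; rewrite /pif; case: ifP => [/is_idP Hid | nid].
  by rewrite /= !Hid // ltn_pmod.
have [i Hi] := f_skew an.
have Hi' : forall c, c < n -> f ((a + c) %% n) = (f a + iter (i %% m) f c) %% n.
  by move=> c cn; rewrite Hi // -iter_mod.
have i0 : i %% m != 0.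
  apply/negP => /eqP i0; move: nid => /negP; apply; apply/is_idP => x xn.
  have fa : f a = a.
    have E := Hi' ((n - a) %% n) (ltn_pmod _ n_gt0).
    move: E; rewrite i0 /= modnDmr subnKC ?(ltnW an) // modnn f0 => E.
    apply: (@addmod_injr ((n - a) %% n)) => //; first exact: f_lt.
    by rewrite -E modnDmr subnKC ?(ltnW an) // modnn.
  have := Hi' ((x + (n - a)) %% n) (ltn_pmod _ n_gt0).
  rewrite i0 /= fa !modnDmr addnCA subnKC ?(ltnW an) // modnDr modn_small //.
have hP : has (fun i => all (fun b => f ((a + b) %% n) == (f a + iter i.+1 f b) %% n)
                      (iota 0 n)) (iota 0 (ordf n f).-1).
  apply/hasP; exists (i %% m).-1.
    rewrite mem_iota add0n; have := ltn_pmod i m_gt0; rewrite /m; lia.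
  rewrite prednK ?lt0n //; apply/allP => c; rewrite mem_iota add0n => cn.
  by apply/eqP; rewrite Hi'.
have := nth_find 0 hP; rewrite nth_iota; last by move: hP; rewrite has_find size_iota.
by rewrite add0n => /allP H; apply/eqP/H; rewrite mem_iota.
Qed.

Lemma pif_gt0 a : 0 < pif n f a.
Proof. by rewrite /pif; case: ifP. Qed.


Definition S k y := \sum_(i < k) pif n f (iter i f y).

Lemma S0 y : S 0 y = 0. Proof. by rewrite /S big_ord0. Qed.
Lemma SS k y : S k.+1 y = S k y + pif n f (iter k f y).
Proof. by rewrite /S big_ord_recr. Qed.

Lemma S_add k l y : S (k + l) y = S k y + S l (iter k f y).
Proof.
elim: l => [|l IH]; first by rewrite addn0 S0 addn0.
by rewrite addnS !SS IH -addnA -iterD (addnC l).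
Qed.

Lemma iter_skew k a b : a < n -> b < n ->
  iter k f ((a + b) %% n) = (iter k f a + iter (S k a) f b) %% n.
Proof.
move=> an bn; elim: k => [|k IH]; first by rewrite S0.
by rewrite !iterS IH pifP ?iter_lt // SS (addnC (S k a)) iterD.
Qed.

Lemma Sm0 a : a < n -> m %| S m a.
Proof.
move=> an; apply: id_dvd => b bn.
apply: (@addmod_inj a) => //; first exact: iter_lt.
have := iter_skew m an bn; rewrite !ord_id ?ltn_pmod //; by move=> ->.
Qed.

Lemma S_mulm q z : z < n -> S (q * m) z %% m = 0.
Proof.
move=> zn; elim: q => [|q IH]; first by rewrite S0.
rewrite mulSn S_add ord_id // -modnDm IH addn0 modn_mod.
by apply/eqP; exact: Sm0.
Qed.

Lemma S_mod k y : y < n -> S k y = S (k %% m) y %[mod m].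
Proof.
move=> yn; rewrite {1}(divn_eq k m) addnC S_add -modnDm S_mulm ?iter_lt //.
by rewrite addn0 modn_mod.
Qed.

Lemma pif_add a b : a < n -> b < n -> pif n f ((a + b) %% n) = S (pif n f a) b %[mod m].
Proof.
move=> an bn; apply: iter_eq_mod => c cn.
have abn : (a + b) %% n < n by apply: ltn_pmod.
apply: (@addmod_inj (f ((a + b) %% n))); try exact: iter_lt.
rewrite -(pifP abn cn).
have E1 : ((a + b) %% n + c) %% n = (a + (b + c) %% n) %% n.
  by rewrite modnDml modnDmr addnA.
rewrite E1 (pifP an (ltn_pmod _ n_gt0)) (iter_skew _ bn cn) (pifP an bn).
by rewrite modnDmr modnDml addnA.
Qed.

Lemma pif0 : pif n f 0 = 1 %[mod m].
Proof.
apply: iter_eq_mod => b bn /=.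
have := @pifP 0 b n_gt0 bn.
by rewrite f0 !add0n modn_small // modn_small ?iter_lt // => <-.
Qed.

Lemma iter_f0 k : iter k f 0 = 0.
Proof. by elim: k => //= k ->; rewrite f0. Qed.

Lemma S_at0 k : S k 0 = k %[mod m].
Proof.
have -> : S k 0 = k * pif n f 0.
  by elim: k => [|k IH]; rewrite ?S0 // SS IH iter_f0 mulSnr.
by rewrite -modnMmr pif0 modnMmr muln1.
Qed.

Lemma S_addarg k a b : a < n -> b < n -> S k ((a + b) %% n) = S (S k a) b %[mod m].
Proof.
move=> an bn; elim: k => [|k IH]; first by rewrite !S0.
rewrite SS -modnDm IH (iter_skew k an bn).
rewrite (pif_add (iter_lt k an) (iter_lt _ bn)) modnDm -S_add.
by rewrite -SS.
Qed.

Definition u := 1 %% n.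
Definition g k := sigmaf n f k u.
Lemma gE k : g k = S k u %% m. Proof. by []. Qed.
Lemma un : u < n. Proof. exact: ltn_pmod. Qed.

Lemma S_iter k x : x < n -> S k x %% m = iter x g (k %% m).
Proof.
elim: x => [|x IH] xn; first by rewrite S_at0.
have ux : (x + u) %% n = x.+1 by rewrite /u modnDmr addn1 modn_small.
rewrite -[in LHS]ux S_addarg ?un ?(ltnW xn) // S_mod ?un // IH ?(ltnW xn) //.
Qed.

Lemma g_n k : k < m -> iter n g k = k.
Proof.
move=> km; have n1 : n.-1 < n by rewrite prednK.
rewrite -(prednK n_gt0) iterS -{1}(modn_small km) -S_iter // gE.
rewrite -S_mod ?un // -S_addarg ?un //.
have -> : (n.-1 + u) %% n = 0 by rewrite /u modnDmr addn1 prednK // modnn.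
by rewrite S_at0 modn_small.
Qed.

Lemma g_skew : is_skew m g.
Proof.
split.
- by move=> x _; rewrite gE ltn_pmod.
- move=> x y xm ym E.
  by rewrite -(g_n xm) -(g_n ym) -(prednK n_gt0) !iterSr E.
- by rewrite gE S0 mod0n.
move=> a am; exists (iter a f u) => b bm.
have := S_iter b (iter_lt a un); rewrite (modn_small bm) => <-.
by rewrite !gE -S_mod ?un // modnDm -S_add.
Qed.

Lemma pif_iter x : x < n -> pif n f x %% m = iter x g (1 %% m).
Proof.
move=> xn; have := @pif_add 0 x n_gt0 xn; rewrite add0n (modn_small xn) => ->.
by rewrite S_iter // pif0.
Qed.

Lemma g_skew_eq a b : a < m -> b < m ->
  g ((a + b) %% m) = (g a + iter (iter a f u) g b) %% m.
Proof.
move=> am bm.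
have := S_iter b (iter_lt a un); rewrite (modn_small bm) => <-.
by rewrite !gE -S_mod ?un // modnDm -S_add.
Qed.

End Skew.

Lemma derived_skew n f : 0 < n -> is_skew n f ->
  0 < (derived (n, f)).1 /\ is_skew (derived (n, f)).1 (derived (n, f)).2.
Proof. by move=> n0 fs; split; [exact: m_gt0 | exact: g_skew]. Qed.

Lemma ordg_dvd n f : 0 < n -> is_skew n f -> ordf (m n f) (g n f) %| n.
Proof.
move=> n0 fs; apply: (id_dvd (m_gt0 n f) (g_skew n0 fs)) => k km.
exact: g_n.
Qed.

Lemma pif_g n f a : 0 < n -> is_skew n f -> a < m n f ->
  pif (m n f) (g n f) a = iter a f (u n) %[mod ordf (m n f) (g n f)].
Proof.
move=> n0 fs am; have gs := g_skew n0 fs; have m0 := m_gt0 n f.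
apply: (iter_eq_mod m0 gs) => b bm.
have := pifP m0 gs am bm; rewrite g_skew_eq // => /eqP.
by rewrite eqn_modDl !modn_small ?(iter_lt gs) // => /eqP.
Qed.

Lemma ordf1 N F : ordf N F = 1 -> forall x, x < N -> F x = x.
Proof.
rewrite /ordf => /eqP; rewrite eqSS => /eqP.
rewrite -(prednK (fact_gt0 N)) /=.
by case: ifP => // /is_idP H _ x xn; apply: H.
Qed.

Lemma iter_res N (h : nat -> nat) d a y : d %| N -> 0 < N ->
  (forall y, y < N -> h y < N) -> (forall y, y < N -> h y = y %[mod d]) ->
  y < N -> iter a h y = y %[mod d].
Proof.
move=> dN N0 hlt hid yN.
have lt : forall b, iter b h y < N by elim=> //= b IH; apply: hlt.
elim: a => //= a IH; by rewrite hid.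
Qed.

Lemma key n f d : 0 < n -> is_skew n f ->
  let p2 := derived (derived (n, f)) in
  d %| p2.1 -> (forall y, y < p2.1 -> p2.2 y = y %[mod d]) ->
  d %| n /\ (forall x, x < n -> f x = x %[mod d]).
Proof.
move=> n0 fs /=.
set m1 := ordf n f.
change (fun a => sigmaf n f a (1 %% n)) with (g n f).
set g1 := g n f.
change (ordf m1 g1) with (ordf (m n f) (g n f)).
set m2 := ordf (m n f) (g n f).
change (fun a => sigmaf m1 g1 a (1 %% m1)) with (g (m n f) (g n f)).
set h := g (m n f) (g n f).
move=> dm2 hid.
have m0 : 0 < m n f := m_gt0 n f.
have gs : is_skew (m n f) (g n f) := g_skew n0 fs.
have m20 : 0 < m2 := m_gt0 _ _.
have m2n : m2 %| n := ordg_dvd n0 fs.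
have dn : d %| n := dvdn_trans dm2 m2n.
split => //.
have Hu : forall a, a < m n f -> iter a f (u n) = 1 %[mod d].
  move=> a am.
  rewrite -(modn_dvdm _ dm2) -(pif_g n0 fs am) (modn_dvdm _ dm2).
  rewrite -(modn_dvdm _ dm2) (pif_iter m0 gs am) -/h.
  rewrite (iter_res (N := m2) _ dm2) //; first by rewrite modn_dvdm.
    by move=> y _; rewrite /h gE ltn_pmod.
  by rewrite ltn_pmod.
have Hu' : forall a, iter a f (u n) = 1 %[mod d].
  by move=> a; rewrite (iter_mod fs _ (un n0)) Hu // ltn_pmod.
elim=> [|x IH] xn; first by rewrite (f0 fs).
have n2 : 1 < n by apply: leq_ltn_trans xn.
have ux : (x + 1) %% n = x.+1 by rewrite addn1 modn_small.
have un1 : u n = 1 by rewrite /u modn_small.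
have E := pifP n0 fs (ltnW xn) n2; rewrite ux in E; rewrite E.
rewrite (modn_dvdm _ dn) -modnDm IH ?(ltnW xn) // -un1 Hu' modnDm addn1.
done.
Qed.

Lemma chain k : forall n f d, 0 < n -> is_skew n f ->
  let q := derived_iter k.*2 n f in
  d %| q.1 -> (forall y, y < q.1 -> q.2 y = y %[mod d]) ->
  d %| n /\ (forall x, x < n -> f x = x %[mod d]).
Proof.
elim: k => [|k IH] n f d n0 fs.
  by move=> /= dn H; split => // x xn; apply: H.
move=> q; rewrite /q /derived_iter doubleS !iterSr.
have [p1pos p1s] := derived_skew n0 fs.
have [p2pos p2s] := derived_skew p1pos p1s.
have K := key (d:=d) n0 fs.
rewrite -surjective_pairing in p2pos p2s.
move: p2pos p2s K; case E: (derived (derived (n, f))) => [n2 f2] p2pos p2s K dq hq.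
have [dn2 H2] := IH n2 f2 d p2pos p2s dq hq.
exact: K.
Qed.

Theorem lemma4p2 (n : nat) (f : nat -> nat) (c : nat) :
  2 <= n -> is_skew n f -> complexity_is n f c -> ~~ odd c ->
  let m := auto_order n f c in
  m %| n /\ (forall x, x < n -> f x = x %[mod m]).
Proof.
move=> n2 fs [c2 c1] ev /=.
have [k Ek] : exists k, c = k.*2.
  by exists c./2; rewrite -{1}(odd_double_half c) (negbTE ev).
subst c; rewrite /auto_order.
apply: (chain (n := n) (f := f)) => //; first exact: ltnW.
move: c1; rewrite /derived_iter iterS /= => c1 y yq.
by rewrite (ordf1 c1).
Qed.
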